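(* Let $i_N=(\pi_N,\varphi_N):\mathcal M(N,K)\to L^-\mathrm{GL}_K\times L^-\mathrm{GL}_1$. Then $\bigcup_N i_N(\mathcal M(N,K))$ is Zariski-dense in $L^-\mathrm{GL}_K\times L^-\mathrm{GL}_1$.
   Context: $\mathcal M(N,K)=\mathrm{Rep}(N,K)/\!/\mathrm{GL}_N$, $\mathrm{Rep}(N,K)$ being triples $(B,\psi,\overline\psi)$ with $B\in\mathrm{Mat}_{N\times N}(\mathbb C)$, $\psi\in\mathrm{Mat}_{N\times K}$, $\overline\psi\in\mathrm{Mat}_{K\times N}$, and $g\cdot(B,\psi,\overline\psi)=(gBg^{-1},g\psi,\overline\psi g^{-1})$. $\widetilde B=B+\psi\overline\psi$. $L^-\mathrm{GL}_K$ is the group scheme of power series $1+\sum_{i\ge1}g_iz^{-i}$, $g_i\in\mathfrak{gl}_K$ (an infinite-dimensional affine space), similarly $L^-\mathrm{GL}_1$ for $K=1$. $\pi_N(B,\psi,\overline\psi)=1+\overline\psi(z-\widetilde B/2)^{-1}\psi$ (expanded in $z^{-1}$), and $\varphi_N(B,\psi,\overline\psi)=z^{-N}\det(z-\widetilde B)$. The maps $i_N$ are closed embeddings compatible with the embeddings $\mathcal M(N,K)\to\mathcal M(N',K)$, $(B,\psi,\overline\psi)\mapsto(\mathrm{diag}(B,0),\binom{\psi}{0},(\overline\psi\ 0))$ for $N<N'$. *)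

(* Defs.v *)
From HB Require Import structures.
From mathcomp Require Import all_boot all_order all_algebra.
From mathcomp Require Import complex.
From mathcomp Require Import Rstruct.
From mathcomp Require Import mpoly.
From Stdlib Require Reals.
Set Implicit Arguments.
Unset Strict Implicit.
Unset Printing Implicit Defensive.
Import GRing.Theory Num.Theory.
Local Open Scope ring_scope.

Notation CC := (complex Rdefinitions.R).

Definition Btilde (N K : nat) (B : 'M[CC]_N) (psi : 'M[CC]_(N, K))
  (psib : 'M[CC]_(K, N)) : 'M[CC]_N := B + psi *m psib.

(* Points of L^-GL_K x L^-GL_1 are recorded by their coefficient sequences:
   g : nat -> 'M_K with g i the coefficient of z^{-(i+1)} in the first factor,
   h : nat -> CC with h i the coefficient of z^{-(i+1)} in the second factor
   (the constant terms are fixed equal to 1). *)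
Definition LGLpt (K : nat) : Type := ((nat -> 'M[CC]_K) * (nat -> CC))%type.

(* pi_N(B,psi,psib) = 1 + psib (z - Bt/2)^{-1} psi
                    = 1 + sum_{i>=0} psib (Bt/2)^i psi z^{-(i+1)} *)
Definition pi_coef (N K : nat) (B : 'M[CC]_N) (psi : 'M[CC]_(N, K))
  (psib : 'M[CC]_(K, N)) (i : nat) : 'M[CC]_K :=
  psib *m (((2%:R : CC)^-1 *: Btilde B psi psib) ^+ i) *m psi.

(* phi_N(B,psi,psib) = z^{-N} det(z - Bt) = z^{-N} char_poly(Bt)(z);
   its coefficient of z^{-(i+1)} is the coefficient of z^{N-(i+1)} in the
   (monic, degree N) characteristic polynomial, and 0 if i+1 > N. *)
Definition phi_coef (N K : nat) (B : 'M[CC]_N) (psi : 'M[CC]_(N, K))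
  (psib : 'M[CC]_(K, N)) (i : nat) : CC :=
  if (i < N)%N then (char_poly (Btilde B psi psib))`_(N - i.+1)%N else 0.

Definition iN (N K : nat) (B : 'M[CC]_N) (psi : 'M[CC]_(N, K))
  (psib : 'M[CC]_(K, N)) : LGLpt K :=
  (pi_coef B psi psib, phi_coef B psi psib).

(* Coordinate functions on the infinite-dimensional affine space
   L^-GL_K x L^-GL_1: the (a,b) entry of g_{i+1}, or h_{i+1}. *)
Definition coord (K : nat) : Type := ((nat * 'I_K * 'I_K) + nat)%type.

Definition coordval (K : nat) (x : LGLpt K) (c : coord K) : CC :=
  match c with
  | inl (i, a, b) => x.1 i a b
  | inr i => x.2 i
  end.

(* Zariski density in the infinite-dimensional affine space: every regular
   function (a polynomial in finitely many distinct coordinates) vanishing on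
   S is the zero polynomial. *)
Definition zariski_dense (K : nat) (S : LGLpt K -> Prop) : Prop :=
  forall (n : nat) (c : 'I_n -> coord K) (P : {mpoly CC[n]}),
    injective c ->
    (forall x, S x -> mpoly.meval (fun j => coordval x (c j)) P = 0) ->
    P = 0.

(* The union over N of the images i_N(M(N,K)); since the GIT quotient map
   Rep(N,K) -> M(N,K) is surjective and i_N is induced by GL_N-invariant maps,
   this is the union of the images of Rep(N,K). *)
Definition union_image (K : nat) (x : LGLpt K) : Prop :=
  exists (N : nat) (B : 'M[CC]_N) (psi : 'M[CC]_(N, K)) (psib : 'M[CC]_(K, N)),
    x = iN B psi psib.

(* Main.v *)
Require Import Defs.
From mathcomp Require Import all_boot all_algebra complex mpoly Rstruct zify.
Import GRing.Theory Num.Theory.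
Local Open Scope ring_scope.

Section Vanish.
Variable R : numFieldType.

Lemma poly_vanish (q : {poly R}) : (forall x, q.[x] = 0) -> q = 0.
Proof.
move=> H; apply/eqP; apply/negPn/negP => nz.
have := max_poly_roots nz (rs := [seq i%:R | i <- iota 0 (size q)]).
rewrite size_map size_iota ltnn.
have A : all (root q) [seq i%:R | i <- iota 0 (size q)] by apply/allP => x _; apply/rootP.
have U : uniq [seq i%:R : R | i <- iota 0 (size q)].
  by rewrite map_inj_uniq ?iota_uniq // => a b /eqP; rewrite eqr_nat => /eqP.
by move/(_ A U).
Qed.

Lemma morph_eq n (S : comNzRingType) (f g : {rmorphism {mpoly R[n]} -> S}) :
  (forall c, f c%:MP = g c%:MP) -> (forall i, f 'X_i = g 'X_i) -> forall p, f p = g p.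
Proof.
move=> Hc HX p; rewrite (mpolyE p) !rmorph_sum; apply: eq_bigr => m _.
rewrite -mul_mpolyC !rmorphM Hc mpolyXE_id !rmorph_prod; congr (_ * _).
by apply: eq_bigr => i _; rewrite !rmorphXn HX.
Qed.

Definition Phi n (q : {poly {mpoly R[n]}}) : {mpoly R[n.+1]} :=
  (map_poly (@mwiden n R) q).['X_ord_max].

Arguments Phi {n}.
Lemma mwidenXU n (i : 'I_n) : mwiden ('X_i : {mpoly R[n]}) = 'X_(widen_ord (leqnSn n) i).
Proof. by rewrite mwidenX mnmwiden1. Qed.

Lemma PhiK n (p : {mpoly R[n.+1]}) : Phi (muni p) = p.
Proof.
rewrite /Phi -[RHS]/(idfun p).
apply: (@morph_eq n.+1 _ ((horner_eval ('X_ord_max : {mpoly R[n.+1]})) \o (map_poly (@mwiden n R)) \o (@muni n R)) idfun) => [c|i].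
  rewrite /= muniC map_polyC /= /horner_eval /=. by rewrite hornerC mwidenC.
rewrite /= /horner_eval /muni /= mmapX mmap1U /=.
case: splitP => j Hj.
  rewrite map_polyC hornerC. change (mwiden ('X_j : {mpoly R[n]}) = 'X_i). rewrite mwidenXU; congr 'X_ _; apply/val_inj => /=; by rewrite -Hj.
rewrite map_polyX hornerX; congr 'X_ _; apply/val_inj => /=.
move: Hj; rewrite (ord1 j) addn0 /= => ->. done.
Qed.

Lemma meval_mwiden n (v : 'I_n.+1 -> R) (r : {mpoly R[n]}) :
  meval v (mwiden r) = meval (fun j => v (widen_ord (leqnSn n) j)) r.
Proof.
rewrite -[LHS]/((meval v \o @mwiden n R) r).
apply: (@morph_eq n _ (meval v \o @mwiden n R) (meval (fun j => v (widen_ord (leqnSn n) j)))) => [c|i] /=.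
  by rewrite mwidenC !mevalC.
by rewrite mwidenXU !mevalXU.
Qed.

Lemma meval_Phi n (v : 'I_n.+1 -> R) (q : {poly {mpoly R[n]}}) :
  meval v (Phi q) = (map_poly (meval (fun j => v (widen_ord (leqnSn n) j))) q).[v ord_max].
Proof.
rewrite /Phi -[v ord_max](mevalXU v) -horner_map -map_poly_comp.
by congr (_.[_]); apply: eq_map_poly => r /=; rewrite meval_mwiden.
Qed.

Lemma mpoly_vanish n (p : {mpoly R[n]}) : (forall v, meval v p = 0) -> p = 0.
Proof.
elim: n p => [|n IH] p H.
  by rewrite (nvar0_mpolyC p); have := H (fun _ => 0); rewrite {1}(nvar0_mpolyC p) mevalC => ->; rewrite mpolyC0.
have Hq : muni p = 0.
  apply/polyP => k; rewrite coef0; apply: IH => w.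
  have Hw : map_poly (meval w) (muni p) = 0.
    apply: poly_vanish => x.
    pose v := fun i : 'I_n.+1 => if unlift ord_max i is Some j then w j else x.
    have := H v; rewrite -{1}(@PhiK n p) meval_Phi.
    have -> : v ord_max = x by rewrite /v unlift_none.
    have -> // : map_poly (meval (fun j => v (widen_ord (leqnSn n) j))) (muni p) = map_poly (meval w) (muni p).
    apply: eq_map_poly => r; apply: meval_eq => j; have -> : widen_ord (leqnSn n) j = lift ord_max j by apply/ord_inj; rewrite lift_max.
    by rewrite /v liftK.
  by have := congr1 (fun r : {poly R} => r`_k) Hw; rewrite coef_map coef0.
by rewrite -(@PhiK n p) Hq /Phi map_poly0 horner0.
Qed.
End Vanish.
Lemma charpoly_ublock (R : comNzRingType) N K (A : 'M[R]_N) (B : 'M_(N,K)) :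
  char_poly (block_mx A B 0 (0 : 'M_K)) = char_poly A * 'X^K.
Proof.
rewrite /char_poly /char_poly_mx map_block_mx !map_mx0 scalar_mx_block.
rewrite opp_block_mx add_block_mx !oppr0 !add0r !addr0 det_ublock det_scalar.
by [].
Qed.

Lemma two_neq0 : (2%:R : CC) != 0.
Proof. by rewrite pnatr_eq0. Qed.

Lemma realize (K : nat) (q : {poly CC}) (Hq : q \is monic) m (g : nat -> 'M[CC]_K) :
  exists N (A : 'M[CC]_N) (psi : 'M_(N,K)) (psib : 'M_(K,N)) s,
   char_poly (2%:R *: A) = 'X^s * q /\
   forall i, (i < m)%N -> psib *m A ^+ i *m psi = g i.
Proof.
elim: m g => [|m IH] g.
  exists (size q).-1, (2%:R^-1 *: companionmx q), 0, 0, 0%N; split => //.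
  by rewrite scalerA mulfV ?two_neq0 // scale1r companionmxK // expr0 mul1r.
have [N [A [psi [psib [s [Hc Hg]]]]]] := IH (fun i => g i.+1).
exists (N + K)%N, (block_mx A psi 0 0), (col_mx 0 1%:M), (row_mx psib (g 0%N)), (s + K)%N.
split.
  rewrite scale_block_mx !scaler0 charpoly_ublock Hc exprD.
  by rewrite -!mulrA [q * _]mulrC.
have pw : forall i, (block_mx A psi 0 0) ^+ i.+1 *m col_mx 0 1%:M = col_mx (A ^+ i *m psi) (0 : 'M_K).
  elim => [|i IHi].
    by rewrite expr1 expr0 mul_block_col !mulmx0 !mulmx1 mul1mx add0r addr0.
  rewrite exprS -mulmxE -mulmxA IHi mul_block_col !mulmx0 !mul0mx !addr0.
  by rewrite exprS -mulmxE mulmxA.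
case => [|i] Hi.
  by rewrite expr0 mulmx1 mul_row_col mulmx0 add0r mulmx1.
by rewrite -mulmxA pw mul_row_col mulmx0 addr0 mulmxA Hg.
Qed.

Lemma realize2 (K : nat) m (g : nat -> 'M[CC]_K) (h : nat -> CC) :
  exists N (B : 'M[CC]_N) (psi : 'M_(N,K)) (psib : 'M_(K,N)),
   (forall i, (i < m)%N -> pi_coef B psi psib i = g i) /\
   (forall i, (i < m)%N -> phi_coef B psi psib i = h i).
Proof.
pose q : {poly CC} := 'X^m + \poly_(k < m) h (m - k.+1)%N.
have szp : (size (\poly_(k < m) h (m - k.+1)%N) < size ('X^m : {poly CC}))%N.
  by rewrite size_polyXn ltnS size_poly.
have Hq : q \is monic by rewrite monicE /q lead_coefDl // lead_coefXn.
have szq : size q = m.+1 by rewrite /q size_addl // size_polyXn.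
have [N [A [psi [psib [s [Hc Hg]]]]]] := @realize K q Hq m g.
have HN : N = (s + m)%N.
  have := size_char_poly (2%:R *: A); rewrite Hc size_mul ?monic_neq0 ?monicXn //.
  by rewrite size_polyXn szq => -[]; lia.
exists N, (2%:R *: A - psi *m psib), psi, psib; split => i Hi.
  by rewrite /pi_coef /Btilde subrK scalerA mulVf ?two_neq0 // scale1r Hg.
rewrite /phi_coef /Btilde subrK Hc HN.
have -> : (i < s + m)%N by lia.
rewrite coefXnM.
have -> : (s + m - i.+1 < s)%N = false by lia.
have -> : (s + m - i.+1 - s = m - i.+1)%N by lia.
rewrite /q coefD coefXn coef_poly.
have -> : (m - i.+1 == m)%N = false by apply/eqP; lia.
have -> : (m - i.+1 < m)%N by lia.
have -> : (m - (m - i.+1).+1 = i)%N by lia.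
by rewrite add0r.
Qed.

Definition cidx (K : nat) (x : Defs.coord K) : nat :=
  match x with inl (i, _, _) => i | inr i => i end.

Arguments cidx {K}.

Theorem mainTheorem5 (K : nat) : zariski_dense (@union_image K).
Proof.
move=> n c P injc HP.
apply: (@mpoly_vanish CC n P) => v.
pose m := (\max_(j < n) cidx (c j)).+1.
pose g := fun i : nat => \matrix_(a < K, b < K)
  (if [pick j | c j == inl (i, a, b)] is Some j then v j else 0).
pose h := fun i : nat => if [pick j | c j == inr i] is Some j then v j else 0.
have [N [B [psi [psib [Hpi Hphi]]]]] := @realize2 K m g h.
have := HP (iN B psi psib) (ex_intro _ N (ex_intro _ B (ex_intro _ psi (ex_intro _ psib erefl)))).
rewrite (@meval_eq _ _ _ v) // => j.
have Hm : (cidx (c j) < m)%N by rewrite ltnS (leq_bigmax (F := fun j => cidx (c j)) j).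
move: Hm; case E: (c j) => [[[i a] b]|i] /= Hm.
  rewrite /iN /= Hpi // mxE.
  case: (pickP (fun j0 => c j0 == inl (i, a, b))) => [j' /eqP Hj'|H]; first by congr v; apply: injc; rewrite Hj' E.
  by have := H j; rewrite E eqxx.
rewrite /iN /= Hphi // /h.
case: (pickP (fun j0 => c j0 == inr i)) => [j' /eqP Hj'|H]; first by congr v; apply: injc; rewrite Hj' E.
by have := H j; rewrite E eqxx.
Qed.
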